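(* Let $K_-,K_+>0$ and define, for the two-layered wavenumber $K(X)=K_-$ for $X<0$, $K(X)=K_+$ for $X>0$, the objects $\Lambda^\pm$, $\beta^\pm$, $R^\pm$, $T^\pm$, $\Psi^\pm$ as in the context. Then: (i) for all $(\lambda,X)\in\Lambda^\pm\times\mathbb{R}$, $|\Psi^\pm(\lambda,X)|\le 2$; (ii) with $\mathbb{D}:=\mathbb{C}\setminus(-\infty,-\min(K_-^2,K_+^2)]$, each of the functions $\lambda\mapsto\beta^\pm(\lambda)$, $\lambda\mapsto R^\pm(\lambda)$, $\lambda\mapsto T^\pm(\lambda)$, and $\lambda\mapsto\Psi^\pm(\lambda,X)$ for every fixed $X\in\mathbb{R}$ (each considered on the real interval $(-\min(K_-^2,K_+^2),+\infty)$) has an analytic continuation to $\mathbb{D}$; moreover the analytic continuations of $(\lambda,X)\mapsto\Psi^\pm(\lambda,X)$ are bounded on every compact subset of $\mathbb{D}\times\mathbb{R}$.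
   Context: $\Lambda^\pm:=(-K_\pm^2,+\infty)$. For $\lambda\in\mathbb{R}$, $\beta^\pm(\lambda):=\sqrt{\lambda+K_\pm^2}$ if $\lambda\ge-K_\pm^2$ and $\beta^\pm(\lambda):=i\sqrt{-\lambda-K_\pm^2}$ if $\lambda<-K_\pm^2$. $R^\pm(\lambda):=\frac{\beta^\pm(\lambda)-\beta^\mp(\lambda)}{\beta^+(\lambda)+\beta^-(\lambda)}$, $T^\pm(\lambda):=\frac{2\beta^\pm(\lambda)}{\beta^+(\lambda)+\beta^-(\lambda)}$. For $(\lambda,X)\in\Lambda^\pm\times\mathbb{R}$: $\Psi^\pm(\lambda,X):=e^{\mp i\beta^\pm(\lambda)X}+R^\pm(\lambda)e^{\pm i\beta^\pm(\lambda)X}$ if $\pm X>0$, and $\Psi^\pm(\lambda,X):=T^\pm(\lambda)e^{\mp i\beta^\mp(\lambda)X}$ if $\mp X>0$. *)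

(* Defs.v *)
From Stdlib Require Import Reals List.
From Coquelicot Require Import Coquelicot.
Open Scope R_scope.

(* Sign index: true = "+", false = "-". *)
Definition Kpm (Km Kp : R) (s : bool) : R := if s then Kp else Km.

Definition cexp (z : C) : C :=
  (exp (Re z) * cos (Im z), exp (Re z) * sin (Im z)).

Definition beta (Km Kp : R) (s : bool) (lam : R) : C :=
  let K := Kpm Km Kp s in
  if Rle_dec (- K ^ 2) lam then RtoC (sqrt (lam + K ^ 2))
  else (0, sqrt (- lam - K ^ 2)).

Definition Rcoef (Km Kp : R) (s : bool) (lam : R) : C :=
  ((beta Km Kp s lam - beta Km Kp (negb s) lam)
   / (beta Km Kp true lam + beta Km Kp false lam))%C.

Definition Tcoef (Km Kp : R) (s : bool) (lam : R) : C :=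
  (2 * beta Km Kp s lam / (beta Km Kp true lam + beta Km Kp false lam))%C.

Definition sgn (s : bool) : R := if s then 1 else -1.

(* Psi^pm(lambda, X).  For s = "+" the first branch is X > 0, for s = "-"
   it is X < 0; at X = 0 both branches agree (1 + R = T), we use the first. *)
Definition Psi (Km Kp : R) (s : bool) (lam X : R) : C :=
  if Rle_dec 0 (sgn s * X) then
    (cexp (- (sgn s) * Ci * beta Km Kp s lam * X)
     + Rcoef Km Kp s lam * cexp ((sgn s) * Ci * beta Km Kp s lam * X))%C
  else
    (Tcoef Km Kp s lam * cexp (- (sgn s) * Ci * beta Km Kp (negb s) lam * X))%C.

Definition Lambda (Km Kp : R) (s : bool) (lam : R) : Prop :=
  - (Kpm Km Kp s) ^ 2 < lam.

Definition Dslit (Km Kp : R) (z : C) : Prop :=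
  ~ (Im z = 0 /\ Re z <= - Rmin (Km ^ 2) (Kp ^ 2)).

Definition analytic_on (U : C -> Prop) (f : C -> C) : Prop :=
  forall z, U z -> ex_derive (K := C_AbsRing) (V := C_NormedModule) f z.

Definition analytic_continuation (Km Kp : R) (g : R -> C) (F : C -> C) : Prop :=
  analytic_on (Dslit Km Kp) F /\
  forall lam : R, - Rmin (Km ^ 2) (Kp ^ 2) < lam -> F (RtoC lam) = g lam.

Definition compact_CR (S : C * R -> Prop) : Prop :=
  forall (I : Type) (U : I -> C * R -> Prop),
    (forall i, @open (prod_UniformSpace C_UniformSpace R_UniformSpace) (U i)) ->
    (forall p, S p -> exists i, U i p) ->
    exists l : list I, forall p, S p -> exists i, In i l /\ U i p.

(* Main.v *)
Require Import Defs.
From Stdlib Require Import Reals Lra List.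
From Coquelicot Require Import Coquelicot.
Open Scope R_scope.

Definition cdiff (f : C -> C) (z l : C) : Prop :=
  forall eps : posreal, exists del : posreal, forall w : C,
    Cmod (w - z) < del -> Cmod (f w - f z - l * (w - z)) <= eps * Cmod (w - z).

Lemma cdiff_is_derive f z l : cdiff f z l ->
  @is_derive C_AbsRing C_NormedModule f z l.
Proof.
  intros H. split.
  - apply is_linear_scal_l.
  - intros x Hx. pose proof (@is_filter_lim_locally_unique C_AbsRing (AbsRing_NormedModule C_AbsRing) z x Hx) as E. subst x.
    intros eps.
    destruct (H eps) as [del Hd]. exists del. intros y Hy.
    specialize (Hd y Hy). 
    change (Cmod (f y - f z - (y - z) * l) <= eps * Cmod (y - z)).
    rewrite (Cmult_comm (y - z)). exact Hd.
Qed.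

Definition hol (f : C -> C) (z : C) := @ex_derive C_AbsRing C_NormedModule f z.

Lemma hol_const (c : C) z : hol (fun _ => c) z.
Proof. exists zero. apply is_derive_const. Qed.

Lemma conv_V f z l : @is_derive C_AbsRing (AbsRing_NormedModule C_AbsRing) f z l ->
  @is_derive C_AbsRing C_NormedModule f z l.
Proof.
  intros [_ H]. split. apply is_linear_scal_l.
  intros x Hx eps. exact (H x Hx eps).
Qed.

Lemma conv_V' f z l : @is_derive C_AbsRing C_NormedModule f z l ->
  @is_derive C_AbsRing (AbsRing_NormedModule C_AbsRing) f z l.
Proof.
  intros [_ H]. split. apply is_linear_scal_l.
  intros x Hx eps. exact (H x Hx eps).
Qed.

Lemma hol_id z : hol (fun w => w) z.
Proof. exists one. apply conv_V. apply (@is_derive_id C_AbsRing). Qed.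

Lemma hol_plus f g z : hol f z -> hol g z -> hol (fun w => f w + g w)%C z.
Proof. intros [a Ha] [b Hb]. exists (plus a b). exact (is_derive_plus f g z a b Ha Hb). Qed.

Lemma hol_opp f z : hol f z -> hol (fun w => - f w)%C z.
Proof. intros [a Ha]. exists (opp a). exact (is_derive_opp f z a Ha). Qed.

Lemma hol_minus f g z : hol f z -> hol g z -> hol (fun w => f w - g w)%C z.
Proof. intros. apply hol_plus; auto. apply hol_opp; auto. Qed.

Lemma hol_mult f g z : hol f z -> hol g z -> hol (fun w => f w * g w)%C z.
Proof. intros [a Ha] [b Hb]. eexists. apply conv_V.
  exact (@is_derive_mult C_AbsRing f g z a b (conv_V' _ _ _ Ha) (conv_V' _ _ _ Hb) Cmult_comm). Qed.

Lemma hol_comp f g z : hol g z -> hol f (g z) -> hol (fun w => f (g w)) z.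
Proof. intros [a Ha] [b Hb]. eexists. exact (is_derive_comp f g z b a Hb (conv_V' _ _ _ Ha)). Qed.

Lemma cdiff_quad f z l rho K : 0 < rho -> 0 < K ->
  (forall w, Cmod (w - z) < rho -> Cmod (f w - f z - l * (w - z)) <= K * Cmod (w - z) ^ 2) ->
  cdiff f z l.
Proof.
  intros Hr HK H eps.
  assert (He : 0 < Rmin rho (eps / K)).
  { apply Rmin_pos; auto. apply Rdiv_lt_0_compat; auto. apply cond_pos. }
  exists (mkposreal _ He). intros w Hw; simpl in Hw.
  eapply Rle_trans. apply H. eapply Rlt_le_trans. apply Hw. apply Rmin_l.
  pose proof (Cmod_ge_0 (w - z)).
  assert (Cmod (w - z) < eps / K) by (eapply Rlt_le_trans; [apply Hw| apply Rmin_r]).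
  assert (K * Cmod (w - z) <= eps).
  { apply Rlt_le in H1. apply (Rmult_le_compat_l K) in H1; [|lra].
    unfold Rdiv in H1. rewrite <- Rmult_assoc, (Rmult_comm K eps), Rmult_assoc, Rinv_r in H1; lra. }
  replace (K * Cmod (w - z) ^ 2) with ((K * Cmod (w - z)) * Cmod (w - z)) by ring.
  apply Rmult_le_compat_r; auto.
Qed.

Lemma hol_cdiff f z l : cdiff f z l -> hol f z.
Proof. intros H. exists l. now apply cdiff_is_derive. Qed.

Lemma hol_inv0 (z : C) : z <> 0%C -> hol Cinv z.
Proof.
  intros Hz. apply hol_cdiff with (l := (- / (z * z))%C).
  pose proof (proj1 (Cmod_gt_0 z) Hz) as Hm.
  apply (cdiff_quad _ _ _ (Cmod z / 2) (2 / (Cmod z ^ 3))); [lra| apply Rdiv_lt_0_compat; [lra| apply pow_lt; lra]|].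
  intros w Hw.
  assert (Hw1 : Cmod z / 2 <= Cmod w).
  { pose proof (Cmod_triangle w (z - w)). replace (w + (z - w))%C with z in H by ring.
    rewrite <- Cmod_opp in Hw. replace (- (w - z))%C with (z - w)%C in Hw by ring. lra. }
  assert (Hw0 : w <> 0%C). { intros E. subst w. rewrite Cmod_0 in Hw1. lra. }
  replace (/ w - / z - - / (z * z) * (w - z))%C with ((w - z) * (w - z) / (w * (z * z)))%C
    by (field; auto).
  rewrite Cmod_div, !Cmod_mult; [| apply Cmult_neq_0; auto; apply Cmult_neq_0; auto].
  apply Rmult_le_reg_r with (Cmod w * (Cmod z * Cmod z)).
  { apply Rmult_lt_0_compat; [lra| nra]. }
  field_simplify; [| lra | lra]. 
  pose proof (Cmod_ge_0 (w - z)). 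
  assert (1 <= 2 * Cmod w / Cmod z).
  { apply Rmult_le_reg_r with (Cmod z); [lra|]. unfold Rdiv. rewrite Rmult_assoc, Rinv_l; lra. }
  replace (2 * Cmod (w - z) ^ 2 * Cmod w / Cmod z) with (Cmod (w - z) ^ 2 * (2 * Cmod w / Cmod z)) by (field; lra).
  pose proof (pow2_ge_0 (Cmod (w - z))). nra.
Qed.

Lemma hol_inv f (z : C) : hol f z -> f z <> 0%C -> hol (fun w => / f w)%C z.
Proof. intros H1 H2. apply (hol_comp Cinv f z H1). now apply hol_inv0. Qed.

Definition csqrt (w : C) : C :=
  (sqrt ((Cmod w + Re w) / 2),
   (if Rlt_dec (Im w) 0 then -1 else 1) * sqrt ((Cmod w - Re w) / 2)).

Lemma Cmod_re_bounds (w : C) : - Cmod w <= Re w <= Cmod w.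
Proof. pose proof (re_le_Cmod w). apply Rabs_le_between in H; lra. Qed.

Lemma csqrt_sq (w : C) : (csqrt w * csqrt w)%C = w.
Proof.
  destruct (Cmod_re_bounds w) as [H1 H2].
  assert (HA : 0 <= (Cmod w + Re w) / 2) by lra.
  assert (HB : 0 <= (Cmod w - Re w) / 2) by lra.
  assert (Hs : ((if Rlt_dec (Im w) 0 then -1 else 1) * (if Rlt_dec (Im w) 0 then -1 else 1) = 1)%R)
    by (destruct Rlt_dec; ring).
  assert (HC : Cmod w ^ 2 = Re w ^ 2 + Im w ^ 2) by apply Cmod2_alt.
  destruct w as [r i]. unfold csqrt, Cmult. simpl in *. f_equal.
  - replace (sqrt ((Cmod (r, i) + r) / 2) * sqrt ((Cmod (r, i) + r) / 2)) with ((Cmod (r, i) + r) / 2)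
      by (rewrite sqrt_sqrt; auto).
    replace ((if Rlt_dec i 0 then -1 else 1) * sqrt ((Cmod (r, i) - r) / 2) *
      ((if Rlt_dec i 0 then -1 else 1) * sqrt ((Cmod (r, i) - r) / 2)))
    with (((if Rlt_dec i 0 then -1 else 1) * (if Rlt_dec i 0 then -1 else 1)) *
       (sqrt ((Cmod (r, i) - r) / 2) * sqrt ((Cmod (r, i) - r) / 2))) by ring.
    rewrite Hs, sqrt_sqrt; auto. field.
  - replace (sqrt ((Cmod (r, i) + r) / 2) *
      ((if Rlt_dec i 0 then -1 else 1) * sqrt ((Cmod (r, i) - r) / 2)) +
      (if Rlt_dec i 0 then -1 else 1) * sqrt ((Cmod (r, i) - r) / 2) *
      sqrt ((Cmod (r, i) + r) / 2))
    with (2 * (if Rlt_dec i 0 then -1 else 1) * sqrt ((Cmod (r, i) + r) / 2 * ((Cmod (r, i) - r) / 2)))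
    by (rewrite sqrt_mult; auto; ring).
    replace ((Cmod (r, i) + r) / 2 * ((Cmod (r, i) - r) / 2)) with (Rsqr (i / 2))
      by (unfold Rsqr; simpl in HC; nra).
    rewrite sqrt_Rsqr_abs. destruct (Rlt_dec i 0).
    + rewrite Rabs_left; [field| lra].
    + rewrite Rabs_right; [field| lra].
Qed.

Lemma csqrt_re (w : C) : 0 <= Re (csqrt w).
Proof. unfold csqrt; simpl. apply sqrt_pos. Qed.

Lemma csqrt_re_pos (w : C) : 0 < Cmod w + Re w -> 0 < Re (csqrt w).
Proof. intros H. unfold csqrt; simpl. apply sqrt_lt_R0. lra. Qed.

Lemma Cmod_ge_re (c : C) : Re c <= Cmod c.
Proof. pose proof (re_le_Cmod c). apply Rabs_le_between in H. lra. Qed.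

Lemma hol_csqrt0 (w0 : C) : 0 < Re (csqrt w0) -> hol csqrt w0.
Proof.
  intros Hr. set (r0 := Re (csqrt w0)) in *.
  apply hol_cdiff with (l := (/ (2 * csqrt w0))%C).
  assert (Hg0 : csqrt w0 <> 0%C).
  { intros E. unfold r0 in Hr. rewrite E in Hr. simpl in Hr. lra. }
  assert (Hm0 : r0 <= Cmod (csqrt w0)) by apply Cmod_ge_re.
  apply (cdiff_quad _ _ _ 1 (/ (2 * r0 ^ 3))); [lra | apply Rinv_0_lt_compat; apply Rmult_lt_0_compat; [lra| apply pow_lt; lra]|].
  intros w _.
  set (g := csqrt w). set (g0 := csqrt w0). set (d := (g - g0)%C).
  assert (Hsum : r0 <= Cmod (g + g0)).
  { eapply Rle_trans; [| apply Cmod_ge_re]. change (Re (g + g0)) with (Re g + Re g0). pose proof (csqrt_re w). fold g in H. assert (r0 = Re g0) by reflexivity. lra. }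
  assert (E : (d * (g + g0))%C = (w - w0)%C).
  { unfold d. rewrite <- (csqrt_sq w), <- (csqrt_sq w0). fold g g0. ring. }
  assert (Hd : Cmod d * Cmod (g + g0) = Cmod (w - w0)) by (rewrite <- Cmod_mult, E; auto).
  replace (d - / (2 * g0) * (w - w0))%C with (- (d * d) / (2 * g0))%C.
  2:{ rewrite <- E. unfold d. field. auto. }
  rewrite Cmod_div, Cmod_opp, !Cmod_mult; [| apply Cmult_neq_0; auto; intros Z; injection Z; lra].
  rewrite Cmod_R, Rabs_right by lra.
  rewrite <- Hd.
  pose proof (Cmod_ge_0 d). pose proof (Cmod_ge_0 (g + g0)).
  apply Rmult_le_reg_r with (2 * Cmod g0); [fold g0 in Hm0; lra|].
  unfold Rdiv. rewrite Rmult_assoc, Rinv_l by (fold g0 in Hm0; lra).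
  fold g0 in Hm0.
  assert (H3 : r0 ^ 3 <= Cmod (g + g0) ^ 2 * Cmod g0).
  { replace (r0 ^ 3) with ((r0 * r0) * r0) by ring. replace (Cmod (g + g0) ^ 2) with (Cmod (g + g0) * Cmod (g + g0)) by ring.
    apply Rmult_le_compat; try nra. }
  replace (/ (2 * r0 ^ 3) * (Cmod d * Cmod (g + g0)) ^ 2 * (2 * Cmod g0)) with
    ((Cmod d * Cmod d) * ((Cmod (g + g0) ^ 2 * Cmod g0) / r0 ^ 3)) by (field; lra).
  assert (1 <= (Cmod (g + g0) ^ 2 * Cmod g0) / r0 ^ 3).
  { apply Rmult_le_reg_r with (r0 ^ 3); [apply pow_lt; lra|]. unfold Rdiv.
    rewrite Rmult_assoc, Rinv_l; [lra| apply pow_nonzero; lra]. }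
  nra.
Qed.


Lemma re_le (c : C) : Rabs (fst c) <= Cmod c.
Proof. eapply Rle_trans; [apply Rmax_l| apply Rmax_Cmod]. Qed.
Lemma im_le (c : C) : Rabs (snd c) <= Cmod c.
Proof. eapply Rle_trans; [apply Rmax_r| apply Rmax_Cmod]. Qed.

Lemma Cmod_le_sum (c : C) : Cmod c <= Rabs (fst c) + Rabs (snd c).
Proof.
  destruct c as [x y]. unfold Cmod; simpl.
  rewrite <- (sqrt_Rsqr (Rabs x + Rabs y)) by (pose proof (Rabs_pos x); pose proof (Rabs_pos y); lra).
  apply sqrt_le_1_alt. unfold Rsqr.
  pose proof (Rabs_pos x); pose proof (Rabs_pos y).
  replace (x * (x * 1)) with (Rabs x * Rabs x) by (rewrite <- Rabs_mult; rewrite Rabs_right; [ring| nra]).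
  replace (y * (y * 1)) with (Rabs y * Rabs y) by (rewrite <- Rabs_mult; rewrite Rabs_right; [ring| nra]).
  nra.
Qed.

Lemma real_lin f x l : derivable_pt_lim f x l ->
  forall eps, 0 < eps -> exists del, 0 < del /\ forall h, Rabs h < del ->
    Rabs (f (x + h) - f x - l * h) <= eps * Rabs h.
Proof.
  intros H eps He. destruct (H eps He) as [d Hd]. exists d. split; [apply cond_pos|].
  intros h Hh. destruct (Req_dec h 0) as [->|Hn].
  - rewrite Rplus_0_r. replace (f x - f x - l * 0) with 0 by ring. rewrite Rabs_R0. lra.
  - specialize (Hd h Hn Hh).
    replace (f (x + h) - f x - l * h) with (((f (x + h) - f x) / h - l) * h) by (field; auto).
    rewrite Rabs_mult. apply Rmult_le_compat_r; [apply Rabs_pos| lra].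
Qed.

Lemma cexp_add (a b : C) : cexp (a + b)%C = (cexp a * cexp b)%C.
Proof.
  destruct a as [a1 a2], b as [b1 b2]. unfold cexp, Cmult, Cplus; simpl.
  rewrite exp_plus, cos_plus, sin_plus. f_equal; ring.
Qed.

Lemma cdiff_cexp0 : cdiff cexp 0%C 1%C.
Proof.
  intros eps.
  set (e := Rmin (eps / 6) 1).
  assert (He : 0 < e) by (apply Rmin_pos; [pose proof (cond_pos eps); lra| lra]).
  assert (He1 : e <= 1) by apply Rmin_r.
  assert (He2 : e <= eps / 6) by apply Rmin_l.
  destruct (real_lin _ _ _ (derivable_pt_lim_exp 0) e He) as [d1 [Hd1 H1]].
  destruct (real_lin _ _ _ (derivable_pt_lim_cos 0) e He) as [d2 [Hd2 H2]].
  destruct (real_lin _ _ _ (derivable_pt_lim_sin 0) e He) as [d3 [Hd3 H3]].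
  rewrite exp_0 in H1. rewrite sin_0, Ropp_0, cos_0 in H2. rewrite cos_0, sin_0 in H3.
  set (d := Rmin (Rmin d1 d2) (Rmin d3 (e / 4))).
  assert (Hd : 0 < d) by (repeat apply Rmin_pos; lra).
  exists (mkposreal d Hd). intros w Hw. simpl in Hw.
  assert (Hdd : d <= d1 /\ d <= d2 /\ d <= d3 /\ d <= e / 4).
  { unfold d. repeat split.
    - eapply Rle_trans; apply Rmin_l.
    - eapply Rle_trans; [apply Rmin_l| apply Rmin_r].
    - eapply Rle_trans; [apply Rmin_r| apply Rmin_l].
    - eapply Rle_trans; [apply Rmin_r| apply Rmin_r]. }
  destruct w as [a b].
  replace ((a, b) - 0)%C with ((a, b) : C) in * by (apply injective_projections; simpl; ring).
  replace (cexp (a, b) - cexp 0 - 1 * (a, b))%C with ((exp a * cos b - 1 - a, exp a * sin b - b) : C)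
    by (unfold cexp; apply injective_projections; simpl; rewrite ?exp_0, ?cos_0, ?sin_0; ring).
  pose proof (re_le (a, b)) as Ha. pose proof (im_le (a, b)) as Hb. simpl in Ha, Hb.
  set (m := Cmod (a, b)) in *.
  assert (A1 : Rabs (exp a - 1 - a) <= e * Rabs a).
  { specialize (H1 a ltac:(lra)). rewrite Rplus_0_l, Rmult_1_l in H1. exact H1. }
  assert (A2 : Rabs (cos b - 1) <= e * Rabs b).
  { specialize (H2 b ltac:(lra)). rewrite Rplus_0_l in H2. replace (cos b - 1) with (cos b - 1 - 0 * b) by ring. exact H2. }
  assert (A3 : Rabs (sin b - b) <= e * Rabs b).
  { specialize (H3 b ltac:(lra)). rewrite Rplus_0_l, Rmult_1_l, Rminus_0_r in H3. exact H3. }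
  assert (Eb : exp a <= 3).
  { eapply Rle_trans; [| apply exp_le_3]. apply Rlt_le, exp_increasing.
    assert (Rabs a < 1) by lra. apply Rabs_def2 in H. lra. }
  assert (Hm : 0 <= m) by apply Cmod_ge_0.
  eapply Rle_trans; [apply Cmod_le_sum|]. simpl.
  assert (R1 : Rabs (exp a * cos b - 1 - a) <= 4 * e * m).
  { replace (exp a * cos b - 1 - a) with ((exp a - 1 - a) + exp a * (cos b - 1)) by ring.
    eapply Rle_trans; [apply Rabs_triang|]. rewrite Rabs_mult.
    rewrite (Rabs_right (exp a)) by (left; apply exp_pos).
    assert (exp a * Rabs (cos b - 1) <= 3 * (e * Rabs b)).
    { apply Rmult_le_compat; auto. left; apply exp_pos. apply Rabs_pos. }
    pose proof (Rabs_pos a). pose proof (Rabs_pos b). nra. }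
  assert (R2 : Rabs (exp a * sin b - b) <= 2 * e * m).
  { replace (exp a * sin b - b) with ((exp a - 1) * sin b + (sin b - b)) by ring.
    eapply Rle_trans; [apply Rabs_triang|]. rewrite Rabs_mult.
    assert (Q1 : Rabs (exp a - 1) <= e / 2).
    { replace (exp a - 1) with ((exp a - 1 - a) + a) by ring.
      eapply Rle_trans; [apply Rabs_triang|]. pose proof (Rabs_pos a). nra. }
    assert (Q2 : Rabs (sin b) <= 2 * m).
    { replace (sin b) with ((sin b - b) + b) by ring.
      eapply Rle_trans; [apply Rabs_triang|]. pose proof (Rabs_pos b). nra. }
    assert (Rabs (exp a - 1) * Rabs (sin b) <= e / 2 * (2 * m)).
    { apply Rmult_le_compat; auto; apply Rabs_pos. }
    pose proof (Rabs_pos b). nra. }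
  nra.
Qed.

Lemma cexp_0 : cexp 0%C = 1%C.
Proof. unfold cexp; apply injective_projections; simpl; rewrite ?exp_0, ?cos_0, ?sin_0; ring. Qed.

Lemma hol_cexp0 (z : C) : hol cexp z.
Proof.
  apply hol_cdiff with (l := cexp z). intros eps.
  set (M := Cmod (cexp z) + 1).
  assert (HM : 0 < M) by (pose proof (Cmod_ge_0 (cexp z)); unfold M; lra).
  assert (He : 0 < eps / M) by (apply Rdiv_lt_0_compat; [apply cond_pos| auto]).
  destruct (cdiff_cexp0 (mkposreal _ He)) as [d Hd].
  exists d. intros w Hw.
  specialize (Hd (w - z)%C). replace (w - z - 0)%C with (w - z)%C in Hd by ring.
  specialize (Hd Hw). simpl in Hd.
  replace (cexp w - cexp z - cexp z * (w - z))%C with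
    (cexp z * (cexp (w - z) - cexp 0 - 1 * (w - z)))%C.
  2:{ rewrite cexp_0. assert (Ew : cexp w = (cexp z * cexp (w - z))%C) by (rewrite <- cexp_add; f_equal; ring). rewrite Ew. ring. }
  rewrite Cmod_mult.
  pose proof (Cmod_ge_0 (cexp z)). pose proof (Cmod_ge_0 (w - z)).
  eapply Rle_trans. apply Rmult_le_compat_l; [auto| exact Hd].
  assert (Cmod (cexp z) * (eps / M) <= eps).
  { apply Rmult_le_reg_r with M; auto. replace (Cmod (cexp z) * (eps / M) * M) with (Cmod (cexp z) * eps) by (field; lra).
    pose proof (cond_pos eps). unfold M. nra. }
  nra.
Qed.

Lemma hol_cexp f (z : C) : hol f z -> hol (fun w => cexp (f w)) z.
Proof. intros H. apply (hol_comp cexp f z H). apply hol_cexp0. Qed.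

Lemma hol_csqrt f (z : C) : hol f z -> 0 < Re (csqrt (f z)) -> hol (fun w => csqrt (f w)) z.
Proof. intros H H2. apply (hol_comp csqrt f z H). now apply hol_csqrt0. Qed.

Definition bC Km Kp s (z : C) : C := csqrt (z + RtoC (Kpm Km Kp s ^ 2))%C.
Definition Rc Km Kp s (z : C) : C :=
  ((bC Km Kp s z - bC Km Kp (negb s) z) / (bC Km Kp true z + bC Km Kp false z))%C.
Definition Tc Km Kp s (z : C) : C :=
  (2 * bC Km Kp s z / (bC Km Kp true z + bC Km Kp false z))%C.
Definition Gf Km Kp s (z : C) (X : R) : C :=
  if Rle_dec 0 (sgn s * X) then
    (cexp (- (sgn s) * Ci * bC Km Kp s z * X)
     + Rc Km Kp s z * cexp ((sgn s) * Ci * bC Km Kp s z * X))%C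
  else
    (Tc Km Kp s z * cexp (- (sgn s) * Ci * bC Km Kp (negb s) z * X))%C.

Lemma Kpm_min Km Kp s : Rmin (Km ^ 2) (Kp ^ 2) <= Kpm Km Kp s ^ 2.
Proof. destruct s; simpl; [apply Rmin_r| apply Rmin_l]. Qed.

Lemma phi_pos Km Kp s z : Dslit Km Kp z ->
  0 < Cmod (z + RtoC (Kpm Km Kp s ^ 2)) + Re (z + RtoC (Kpm Km Kp s ^ 2)).
Proof.
  intros HD. pose proof (Kpm_min Km Kp s) as Hm.
  set (w := (z + RtoC (Kpm Km Kp s ^ 2))%C).
  assert (Hre : Re w = Re z + Kpm Km Kp s ^ 2) by (unfold w; destruct z; unfold Cplus, RtoC; simpl; ring).
  assert (Him : Im w = Im z) by (unfold w; destruct z; unfold Cplus, RtoC; simpl; ring).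
  pose proof (Cmod2_alt w) as H2. pose proof (Cmod_ge_0 w) as H0.
  destruct (Req_dec (Im z) 0) as [Hi|Hi].
  - assert (Re z > - Rmin (Km ^ 2) (Kp ^ 2)).
    { destruct (Rle_lt_dec (Re z) (- Rmin (Km ^ 2) (Kp ^ 2))); auto. exfalso; apply HD; auto. }
    pose proof (Cmod_ge_re w). lra.
  - assert (0 < Im w ^ 2) by (rewrite Him; apply pow2_gt_0; auto).
    destruct (Rle_lt_dec 0 (Re w)).
    + assert (0 < Cmod w). { apply Rnot_le_lt. intros Hc. assert (Cmod w = 0) by lra. rewrite H1 in H2. nra. }
      lra.
    + nra.
Qed.

Lemma bC_re_pos Km Kp s z : Dslit Km Kp z -> 0 < Re (bC Km Kp s z).
Proof. intros H. apply csqrt_re_pos, phi_pos, H. Qed.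

Lemma bC_sum_neq Km Kp z : Dslit Km Kp z -> (bC Km Kp true z + bC Km Kp false z)%C <> 0%C.
Proof.
  intros H E. pose proof (bC_re_pos Km Kp true z H). pose proof (bC_re_pos Km Kp false z H).
  assert (Re (bC Km Kp true z + bC Km Kp false z)%C = 0) by (rewrite E; reflexivity).
  change (Re (bC Km Kp true z) + Re (bC Km Kp false z) = 0) in H2. lra.
Qed.

Lemma bC_real Km Kp s lam : - Rmin (Km ^ 2) (Kp ^ 2) < lam -> bC Km Kp s (RtoC lam) = beta Km Kp s lam.
Proof.
  intros H. pose proof (Kpm_min Km Kp s).
  unfold bC, beta. destruct Rle_dec as [_|n]; [| exfalso; lra].
  set (x := lam + Kpm Km Kp s ^ 2).
  assert (Hx : 0 < x) by (unfold x; lra).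
  replace (RtoC lam + RtoC (Kpm Km Kp s ^ 2))%C with (RtoC x) by (unfold x; apply injective_projections; simpl; ring).
  unfold csqrt. rewrite Cmod_R, Rabs_right by lra. simpl.
  replace ((x + x) / 2) with x by field. replace ((x - x) / 2) with 0 by field.
  rewrite sqrt_0, Rmult_0_r. reflexivity.
Qed.

Lemma hol_bC Km Kp s z : Dslit Km Kp z -> hol (bC Km Kp s) z.
Proof.
  intros H. unfold bC. apply hol_csqrt.
  - apply hol_plus; [apply hol_id| apply hol_const].
  - apply bC_re_pos, H.
Qed.

Lemma ac_beta Km Kp s : analytic_continuation Km Kp (beta Km Kp s) (bC Km Kp s).
Proof. split. intros z H. now apply hol_bC. intros lam H. now apply bC_real. Qed.

Lemma hol_Rc Km Kp s z : Dslit Km Kp z -> hol (Rc Km Kp s) z.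
Proof.
  intros H. unfold Rc, Cdiv. apply hol_mult.
  - apply hol_minus; apply hol_bC; auto.
  - apply hol_inv. apply hol_plus; apply hol_bC; auto. now apply bC_sum_neq.
Qed.

Lemma hol_Tc Km Kp s z : Dslit Km Kp z -> hol (Tc Km Kp s) z.
Proof.
  intros H. unfold Tc, Cdiv. apply hol_mult.
  - apply hol_mult; [apply hol_const| apply hol_bC; auto].
  - apply hol_inv. apply hol_plus; apply hol_bC; auto. now apply bC_sum_neq.
Qed.

Lemma Rc_real Km Kp s lam : - Rmin (Km ^ 2) (Kp ^ 2) < lam -> Rc Km Kp s (RtoC lam) = Rcoef Km Kp s lam.
Proof. intros H. unfold Rc, Rcoef. rewrite !bC_real; auto. Qed.

Lemma Tc_real Km Kp s lam : - Rmin (Km ^ 2) (Kp ^ 2) < lam -> Tc Km Kp s (RtoC lam) = Tcoef Km Kp s lam.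
Proof. intros H. unfold Tc, Tcoef. rewrite !bC_real; auto. Qed.

Lemma ac_R Km Kp s : analytic_continuation Km Kp (Rcoef Km Kp s) (Rc Km Kp s).
Proof. split. intros z H. now apply hol_Rc. intros lam H. now apply Rc_real. Qed.

Lemma ac_T Km Kp s : analytic_continuation Km Kp (Tcoef Km Kp s) (Tc Km Kp s).
Proof. split. intros z H. now apply hol_Tc. intros lam H. now apply Tc_real. Qed.

Lemma ac_G Km Kp s X : analytic_continuation Km Kp (fun lam => Psi Km Kp s lam X) (fun z => Gf Km Kp s z X).
Proof.
  split.
  - intros z H. unfold Gf. destruct Rle_dec.
    + apply hol_plus.
      * apply hol_cexp. apply hol_mult; [| apply hol_const]. apply hol_mult; [apply hol_const| apply hol_bC; auto].
      * apply hol_mult; [apply hol_Rc; auto|].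
        apply hol_cexp. apply hol_mult; [| apply hol_const]. apply hol_mult; [apply hol_const| apply hol_bC; auto].
    + apply hol_mult; [apply hol_Tc; auto|].
      apply hol_cexp. apply hol_mult; [| apply hol_const]. apply hol_mult; [apply hol_const| apply hol_bC; auto].
  - intros lam H. unfold Gf, Psi. rewrite Rc_real, Tc_real, !bC_real; auto.
Qed.

Lemma Cmod_cexp (w : C) : Cmod (cexp w) = exp (Re w).
Proof.
  destruct w as [a b]. unfold cexp, Cmod; simpl.
  match goal with |- sqrt ?x = _ => replace x with (Rsqr (exp a)) end.
  apply sqrt_Rsqr. left; apply exp_pos.
  unfold Rsqr; pose proof (sin2_cos2 b); unfold Rsqr in H. 
  replace (exp a * exp a) with (exp a * exp a * (sin b * sin b + cos b * cos b)) by (rewrite H; ring). ring.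
Qed.

Lemma Cmod_minus_le_plus (b c : C) : 0 <= Re b -> Im b = 0 -> 0 <= Re c ->
  Cmod (b - c) <= Cmod (b + c).
Proof.
  intros H1 H2 H3. unfold Cmod. apply sqrt_le_1_alt.
  destruct b as [b1 b2], c as [c1 c2]. simpl in *. subst. nra.
Qed.

Lemma Psi_bound Km Kp s lam X : Lambda Km Kp s lam -> Cmod (Psi Km Kp s lam X) <= 2.
Proof.
  intros HL. unfold Lambda in HL.
  assert (Hb : exists rb, 0 < rb /\ beta Km Kp s lam = RtoC rb).
  { unfold beta. destruct Rle_dec; [| lra]. exists (sqrt (lam + Kpm Km Kp s ^ 2)). split; auto.
    apply sqrt_lt_R0. lra. }
  destruct Hb as [rb [Hrb Eb]].
  assert (Hc : 0 <= Re (beta Km Kp (negb s) lam) /\ 0 <= Im (beta Km Kp (negb s) lam)).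
  { unfold beta. destruct Rle_dec; simpl; split; try lra; apply sqrt_pos. }
  set (c := beta Km Kp (negb s) lam) in *.
  assert (ED : (beta Km Kp true lam + beta Km Kp false lam)%C = (RtoC rb + c)%C).
  { unfold c. rewrite <- Eb. destruct s; simpl; [reflexivity| apply Cplus_comm]. }
  assert (HD : rb <= Cmod (RtoC rb + c)).
  { eapply Rle_trans; [| apply Cmod_ge_re]. change (Re (RtoC rb + c)) with (rb + Re c). lra. }
  assert (HDn : (RtoC rb + c)%C <> 0%C).
  { intros E. rewrite E, Cmod_0 in HD. lra. }
  assert (HR : Cmod (Rcoef Km Kp s lam) <= 1).
  { unfold Rcoef. rewrite ED. fold c. rewrite Eb, Cmod_div by auto.
    apply Rmult_le_reg_r with (Cmod (RtoC rb + c)); [lra|].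
    unfold Rdiv. rewrite Rmult_assoc, Rinv_l by lra. rewrite ?Rmult_1_l, ?Rmult_1_r.
    apply Cmod_minus_le_plus; simpl; lra. }
  assert (HT : Cmod (Tcoef Km Kp s lam) <= 2).
  { unfold Tcoef. rewrite ED, Eb, Cmod_div by auto. rewrite Cmod_mult, !Cmod_R, !Rabs_right by lra.
    apply Rmult_le_reg_r with (Cmod (RtoC rb + c)); [lra|].
    unfold Rdiv. rewrite Rmult_assoc, Rinv_l by lra. nra. }
  unfold Psi. fold c. rewrite Eb. destruct Rle_dec as [Hx|Hx].
  - eapply Rle_trans; [apply Cmod_triangle|]. rewrite Cmod_mult, !Cmod_cexp.
    match goal with |- exp ?a + _ * exp ?b <= _ => assert (Ea : a = 0) by (simpl; ring); assert (Eb' : b = 0) by (simpl; ring) end.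
    rewrite Ea, Eb', exp_0. lra.
  - rewrite Cmod_mult, Cmod_cexp.
    match goal with |- _ * exp ?a <= _ => assert (Ea : a <= 0) end.
    { simpl. assert (0 <= snd c) by exact (proj2 Hc). apply Rnot_le_lt in Hx. nra. }
    assert (exp (Re (- sgn s * Ci * c * X))%C <= 1).
    { rewrite <- exp_0. destruct Ea. left; apply exp_increasing; auto. rewrite H; lra. }
    pose proof (Cmod_ge_0 (Tcoef Km Kp s lam)). pose proof (exp_pos (Re (- sgn s * Ci * c * X))%C). nra.
Qed.

Lemma Cmod_csqrt_sq (w : C) : Cmod (csqrt w) ^ 2 = Cmod w.
Proof. rewrite <- (csqrt_sq w) at 2. rewrite Cmod_mult. ring. Qed.

Lemma bC_bound Km Kp s z n : 0 <= n -> Cmod z <= n ->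
  Cmod (bC Km Kp s z) <= n + Km ^ 2 + Kp ^ 2 + 1.
Proof.
  intros Hn Hz. unfold bC. set (g := csqrt _).
  assert (Cmod g ^ 2 <= n + Km ^ 2 + Kp ^ 2).
  { unfold g. rewrite Cmod_csqrt_sq. eapply Rle_trans; [apply Cmod_triangle|].
    rewrite Cmod_R, Rabs_right by (apply Rle_ge, pow2_ge_0).
    pose proof (pow2_ge_0 Km). pose proof (pow2_ge_0 Kp). destruct s; simpl Kpm; lra. }
  pose proof (Cmod_ge_0 g). pose proof (pow2_ge_0 Km). pose proof (pow2_ge_0 Kp). nra.
Qed.

Lemma cexp_bound (k b : C) (X B n : R) : Cmod k = 1 -> Cmod b <= B -> Rabs X <= n ->
  Cmod (cexp (k * Ci * b * X)) <= exp (B * n).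
Proof.
  intros Hk Hb HX. rewrite Cmod_cexp.
  assert (Hc : Cmod (k * Ci * b * X)%C <= B * n).
  2:{ destruct (Rle_lt_or_eq_dec _ _ (Rle_trans _ _ _ (Cmod_ge_re (k * Ci * b * X)%C) Hc)) as [H|H].
  - apply Rlt_le, exp_increasing. exact H.
  - rewrite H. lra. }
  rewrite !Cmod_mult, Hk, Cmod_Ci, Cmod_R. pose proof (Cmod_ge_0 b). pose proof (Rabs_pos X).
  replace (1 * 1 * Cmod b * Rabs X) with (Cmod b * Rabs X) by ring.
  apply Rmult_le_compat; lra.
Qed.

Lemma sgn_mod s : Cmod (RtoC (sgn s)) = 1 /\ Cmod (- RtoC (sgn s))%C = 1.
Proof. rewrite Cmod_opp, Cmod_R. destruct s; simpl; rewrite ?Rabs_R1, ?Rabs_m1; auto. Qed.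

Definition phiT Km Kp (z : C) : R :=
  Cmod (z + RtoC (Kpm Km Kp true ^ 2)) + Re (z + RtoC (Kpm Km Kp true ^ 2)).

Definition Bb Km Kp n := n + Km ^ 2 + Kp ^ 2 + 1.
Definition dl n := sqrt (/ (n + 1) / 2).
Definition Mb Km Kp n := exp (Bb Km Kp n * n) + 2 * Bb Km Kp n / dl n * exp (Bb Km Kp n * n).

Lemma div_bound (a d : C) A del : 0 < del -> Cmod a <= A -> del <= Cmod d -> Cmod (a / d) <= A / del.
Proof.
  intros H1 H2 H3. assert (d <> 0%C) by (intros E; rewrite E, Cmod_0 in H3; lra).
  rewrite Cmod_div by auto. unfold Rdiv. pose proof (Cmod_ge_0 a).
  apply Rmult_le_compat; auto. left; apply Rinv_0_lt_compat; lra.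
  apply Rinv_le_contravar; auto.
Qed.

Lemma G_bound Km Kp s z X n : 0 <= n -> Cmod z <= n -> Rabs X <= n -> / (n + 1) <= phiT Km Kp z ->
  Cmod (Gf Km Kp s z X) <= Mb Km Kp n.
Proof.
  intros Hn Hz HX Hp.
  assert (HB : forall s', Cmod (bC Km Kp s' z) <= Bb Km Kp n) by (intros; apply bC_bound; auto).
  assert (Hd0 : 0 < dl n) by (unfold dl; apply sqrt_lt_R0; apply Rdiv_lt_0_compat; [apply Rinv_0_lt_compat; lra| lra]).
  assert (Hd : dl n <= Cmod (bC Km Kp true z + bC Km Kp false z)).
  { eapply Rle_trans; [| apply Cmod_ge_re].
    change (Re (bC Km Kp true z + bC Km Kp false z)) with (Re (bC Km Kp true z) + Re (bC Km Kp false z)).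
    pose proof (csqrt_re (z + RtoC (Kpm Km Kp false ^ 2))).
    change (Re (bC Km Kp true z)) with (sqrt (phiT Km Kp z / 2)).
    change (Re (bC Km Kp false z)) with (Re (csqrt (z + RtoC (Kpm Km Kp false ^ 2)))).
    unfold dl. assert (sqrt (/ (n + 1) / 2) <= sqrt (phiT Km Kp z / 2)).
    { apply sqrt_le_1_alt. lra. }
    lra. }
  assert (HBp : 0 <= Bb Km Kp n) by (eapply Rle_trans; [apply Cmod_ge_0| apply (HB true)]).
  assert (HR : Cmod (Rc Km Kp s z) <= 2 * Bb Km Kp n / dl n).
  { unfold Rc. apply div_bound; auto. unfold Cminus. eapply Rle_trans; [apply Cmod_triangle|].
    rewrite Cmod_opp. pose proof (HB s). pose proof (HB (negb s)). lra. }
  assert (HT : Cmod (Tc Km Kp s z) <= 2 * Bb Km Kp n / dl n).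
  { unfold Tc. apply div_bound; auto. rewrite Cmod_mult, Cmod_R, Rabs_right by lra.
    pose proof (HB s). lra. }
  destruct (sgn_mod s) as [S1 S2].
  pose proof (exp_pos (Bb Km Kp n * n)).
  assert (0 <= 2 * Bb Km Kp n / dl n) by (apply Rmult_le_pos; [lra| left; apply Rinv_0_lt_compat; auto]).
  unfold Gf, Mb. destruct Rle_dec.
  - eapply Rle_trans; [apply Cmod_triangle|]. rewrite Cmod_mult.
    pose proof (cexp_bound _ _ X _ n S2 (HB s) HX).
    pose proof (cexp_bound _ _ X _ n S1 (HB s) HX).
    pose proof (Cmod_ge_0 (Rc Km Kp s z)).
    apply Rplus_le_compat; auto. apply Rmult_le_compat; auto. apply Cmod_ge_0.
  - rewrite Cmod_mult.
    pose proof (cexp_bound _ _ X _ n S2 (HB (negb s)) HX).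
    pose proof (Cmod_ge_0 (Tc Km Kp s z)).
    pose proof (Cmod_ge_0 (cexp (- sgn s * Ci * bC Km Kp (negb s) z * X))).
    assert (Cmod (Tc Km Kp s z) * Cmod (cexp (- sgn s * Ci * bC Km Kp (negb s) z * X)) <=
            2 * Bb Km Kp n / dl n * exp (Bb Km Kp n * n)) by (apply Rmult_le_compat; auto).
    lra.
Qed.

Definition PT := prod_UniformSpace C_UniformSpace R_UniformSpace.

Lemma ball_CR (p q : PT) (e : R) : ball p e q ->
  Rabs (fst (fst q) - fst (fst p)) < e /\ Rabs (snd (fst q) - snd (fst p)) < e /\ Rabs (snd q - snd p) < e.
Proof. intros [[H1 H2] H3]. exact (conj H1 (conj H2 H3)). Qed.

Lemma open_lip (f : PT -> R) (c : R) :
  (forall (p q : PT) (e : posreal), ball p e q -> Rabs (f q - f p) <= 3 * e) ->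
  open (fun p => f p < c) /\ open (fun p => c < f p).
Proof.
  intros H. split.
  - intros p Hp. assert (He : 0 < (c - f p) / 4) by lra.
    exists (mkposreal _ He). intros q Hq. specialize (H p q _ Hq). simpl in H.
    apply Rabs_le_between in H. lra.
  - intros p Hp. assert (He : 0 < (f p - c) / 4) by lra.
    exists (mkposreal _ He). intros q Hq. specialize (H p q _ Hq). simpl in H.
    apply Rabs_le_between in H. lra.
Qed.

Lemma Cmod_lip (a b : C) : Rabs (Cmod a - Cmod b) <= Rabs (fst a - fst b) + Rabs (snd a - snd b).
Proof.
  assert (Cmod (a - b) <= Rabs (fst a - fst b) + Rabs (snd a - snd b)) by apply Cmod_le_sum.
  pose proof (Cmod_triangle (a - b) b). pose proof (Cmod_triangle (b - a) a).
  replace (a - b + b)%C with a in H0 by ring. replace (b - a + a)%C with b in H1 by ring.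
  replace (b - a)%C with (- (a - b))%C in H1 by ring. rewrite Cmod_opp in H1.
  apply Rabs_le. lra.
Qed.

Definition Un Km Kp (n : nat) (p : C * R) : Prop :=
  Cmod (fst p) < INR n /\ Rabs (snd p) < INR n /\ / (INR n + 1) < phiT Km Kp (fst p).

Lemma open_Un Km Kp n : open (Un Km Kp n).
Proof.
  unfold Un. apply open_and; [| apply open_and].
  - apply (open_lip (fun p : PT => Cmod (fst p))). intros p q e Hb. apply ball_CR in Hb.
    eapply Rle_trans; [apply Cmod_lip|]. pose proof (cond_pos e). lra.
  - apply (open_lip (fun p : PT => Rabs (snd p))). intros p q e Hb. apply ball_CR in Hb.
    eapply Rle_trans; [apply Rabs_triang_inv2|]. pose proof (cond_pos e). lra.
  - apply (open_lip (fun p : PT => phiT Km Kp (fst p))). intros p q e Hb. apply ball_CR in Hb.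
    unfold phiT. set (a := fst q). set (b := fst p). set (K := RtoC (Kpm Km Kp true ^ 2)).
    pose proof (Cmod_lip (a + K) (b + K)) as H.
    assert (E1 : fst (a + K)%C - fst (b + K)%C = fst a - fst b) by (unfold K; simpl; ring).
    assert (E2 : snd (a + K)%C - snd (b + K)%C = snd a - snd b) by (unfold K; simpl; ring).
    assert (E3 : Re (a + K)%C - Re (b + K)%C = fst a - fst b) by exact E1.
    rewrite E1, E2 in H. destruct Hb as [H1 [H2 _]]. fold a b in H1, H2.
    pose proof (cond_pos e).
    replace (Cmod (a + K) + Re (a + K) - (Cmod (b + K) + Re (b + K))) with
      ((Cmod (a + K) - Cmod (b + K)) + (Re (a + K) - Re (b + K))) by ring.
    rewrite E3. eapply Rle_trans; [apply Rabs_triang|]. lra.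
Qed.

Lemma in_le_max (l : list nat) i : In i l -> (i <= fold_right Nat.max 0%nat l)%nat.
Proof.
  induction l as [|a l IH]; simpl; [tauto|]. intros [->|H].
  - apply Nat.le_max_l.
  - eapply Nat.le_trans; [apply IH; auto| apply Nat.le_max_r].
Qed.

Lemma compact_bound Km Kp s (S : C * R -> Prop) : compact_CR S ->
  (forall p, S p -> Dslit Km Kp (fst p)) ->
  exists M : R, forall p, S p -> Cmod (Gf Km Kp s (fst p) (snd p)) <= M.
Proof.
  intros HS HD.
  destruct (HS nat (Un Km Kp)) as [l Hl].
  - intros i. apply open_Un.
  - intros p Hp. pose proof (phi_pos Km Kp true (fst p) (HD p Hp)) as Hph.
    fold (phiT Km Kp (fst p)) in Hph.
    destruct (INR_unbounded (Rmax (Cmod (fst p)) (Rmax (Rabs (snd p)) (/ phiT Km Kp (fst p))))) as [n Hn].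
    exists n. unfold Un.
    pose proof (Rmax_l (Cmod (fst p)) (Rmax (Rabs (snd p)) (/ phiT Km Kp (fst p)))).
    pose proof (Rmax_r (Cmod (fst p)) (Rmax (Rabs (snd p)) (/ phiT Km Kp (fst p)))).
    pose proof (Rmax_l (Rabs (snd p)) (/ phiT Km Kp (fst p))).
    pose proof (Rmax_r (Rabs (snd p)) (/ phiT Km Kp (fst p))).
    split; [lra| split; [lra|]].
    rewrite <- (Rinv_inv (phiT Km Kp (fst p))).
    apply Rinv_lt_contravar.
    + apply Rmult_lt_0_compat. apply Rinv_0_lt_compat; auto. pose proof (pos_INR n). lra.
    + lra.
  - set (N := fold_right Nat.max 0%nat l). exists (Mb Km Kp (INR N)).
    intros p Hp. destruct (Hl p Hp) as [i [Hi [H1 [H2 H3]]]].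
    pose proof (le_INR _ _ (in_le_max l i Hi)) as HiN. fold N in HiN.
    pose proof (pos_INR i).
    apply G_bound; try lra.
    eapply Rle_trans; [| left; exact H3].
    apply Rinv_le_contravar; lra.
Qed.

Theorem proposition2p1 (Km Kp : R) (hKm : 0 < Km) (hKp : 0 < Kp) :
  (* (i) *)
  (forall (s : bool) (lam X : R), Lambda Km Kp s lam ->
     Cmod (Psi Km Kp s lam X) <= 2) /\
  (* (ii) *)
  (forall s : bool,
     (exists F, analytic_continuation Km Kp (beta Km Kp s) F) /\
     (exists F, analytic_continuation Km Kp (Rcoef Km Kp s) F) /\
     (exists F, analytic_continuation Km Kp (Tcoef Km Kp s) F) /\
     (exists G : C -> R -> C,
        (forall X : R,
           analytic_continuation Km Kp (fun lam => Psi Km Kp s lam X)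
             (fun z => G z X)) /\
        (forall S : C * R -> Prop, compact_CR S ->
           (forall p, S p -> Dslit Km Kp (fst p)) ->
           exists M : R, forall p, S p -> Cmod (G (fst p) (snd p)) <= M))).
Proof.
  split.
  - intros s lam X H. now apply Psi_bound.
  - intros s. split; [eexists; apply ac_beta|].
    split; [eexists; apply ac_R|].
    split; [eexists; apply ac_T|].
    exists (Gf Km Kp s). split.
    + intros X. apply ac_G.
    + intros S HS HD. now apply compact_bound.
Qed.
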